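(* Let $q$ be a prime power, $m$ and $g$ positive integers, and let $p_1(x),\dots,p_g(x)\in\mathbb{F}_q[x]$ be polynomials of degree $m$ with $\gcd(p_i,p_j)=1$ for all $1\le i\ne j\le g$. For $1\le i\le g$ let $V_i=\{f(x)/p_i(x):\ f\in\mathbb{F}_q[x],\ \deg f\le m-1\}$. Let $Q(x)\in\mathbb{F}_q[x]$ be an irreducible polynomial coprime with every $p_i(x)$, and for a rational function $u\in V_i$ let $u(Q)$ denote the residue class of $u$ in $\mathbb{F}_q[x]/(Q(x))\cong\mathbb{F}_{q^{\deg Q}}$. Let $T\subseteq\{1,\dots,g\}$ with $|T|\le \deg(Q)/m$. If $g_i\in V_i$ ($i\in T$) satisfy $\sum_{i\in T} g_i(Q)=0$, then $g_i=0$ for all $i\in T$.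
   Context: The residue class $u(Q)$ of $u=f/p_i$ is well defined since $p_i$ is invertible modulo the irreducible polynomial $Q$ coprime to it. *)

(* Defs.v *)
From HB Require Import structures.
From mathcomp Require Import all_boot all_order all_algebra.
Set Implicit Arguments. Unset Strict Implicit. Unset Printing Implicit Defensive.
Import GRing.Theory.
Local Open Scope ring_scope.

(* The monic associate of Q; it generates the same ideal (Q) of F[x]. *)
Definition monic_assoc (F : fieldType) (Q : {poly F}) : {poly F} :=
  (lead_coef Q)^-1 *: Q.

(* Residue class u(Q) in F[x]/(Q) of the rational function u = f / p,
   computed as [f] * [p]^-1 in the quotient ring {poly %/ monic_assoc Q}. *)
Definition resid (F : fieldType) (Q p f : {poly F}) : {poly %/ monic_assoc Q} :=
  in_qpoly (monic_assoc Q) f / in_qpoly (monic_assoc Q) p.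

(* Main.v *)
Require Import Defs.
From HB Require Import structures.
From mathcomp Require Import all_boot all_order all_algebra.
From mathcomp Require Import zify.
Import GRing.Theory Num.Theory.
Local Open Scope ring_scope.

Lemma size_prod_bound (F : fieldType) (I : finType) (P : pred I)
  (p : I -> {poly F}) (m : nat) :
  (forall i, size (p i) = m.+1) ->
  (size (\prod_(i | P i) p i)%R <= m * #|P| + 1)%N.
Proof.
move=> Hs; apply: leq_trans (size_poly_prod_leq _ _) _.
rewrite (eq_bigr (fun _ => m.+1)) ?sum_nat_const; last by move=> i _; rewrite Hs.
rewrite mulnS; lia.
Qed.

Theorem lemma3p1 (F : finFieldType) (m g : nat) (p : 'I_g -> {poly F})
    (Q : {poly F}) (T : {set 'I_g}) (f : 'I_g -> {poly F}) :
  (0 < m)%N -> (0 < g)%N ->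
  (forall i, size (p i) = m.+1) ->
  (forall i j, i != j -> coprimep (p i) (p j)) ->
  irreducible_poly Q ->
  (forall i, coprimep Q (p i)) ->
  ((#|T|)%:R <= ((size Q).-1)%:R / m%:R :> rat) ->
  (forall i, i \in T -> (size (f i) <= m)%N) ->
  \sum_(i in T) resid Q (p i) (f i) = 0 ->
  forall i, i \in T -> f i = 0.
Proof.
move=> m0 g0 Hsp Hcop Hirr HQp Hrat Hsf Hsum.
have Qs : (1 < size Q)%N by case: Hirr.
have Q0 : Q != 0 by rewrite -size_poly_gt0; lia.
have lc0 : lead_coef Q != 0 by rewrite lead_coef_eq0.
have lci0 : (lead_coef Q)^-1 != 0 by rewrite invr_eq0.
set h := monic_assoc Q.
have hmon : h \is monic by rewrite monicE /h lead_coefZ mulVf.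
have hsz : size h = size Q by rewrite /h size_scale.
have mkE : mk_monic h = h by rewrite /mk_monic hsz Qs hmon.
have K1 : forall x, in_qpoly h x = 0 -> Q %| x.
  move=> x /(congr1 val) /=; rewrite mkE -Pdiv.IdomainMonic.modpE // => Hx.
  have : h %| x by rewrite /dvdp Hx.
  by rewrite /h dvdpZl.
have K2 : forall x, coprimep Q x -> in_qpoly h x \is a GRing.unit.
  move=> x Hx; rewrite unfold_in /= mkE -Pdiv.IdomainMonic.modpE //.
  by rewrite coprimep_modr /h coprimepZl.
have Km : (m * #|T| <= (size Q).-1)%N.
  move: Hrat; rewrite ler_pdivlMr ?ltr0n // -natrM ler_nat; lia.
pose Pj i := \prod_(j in T | j != i) p j.
pose S := \sum_(i in T) f i * Pj i.
have HS : in_qpoly h S = 0.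
  rewrite rmorph_sum /=.
  transitivity ((\sum_(i in T) resid Q (p i) (f i)) * in_qpoly h (\prod_(j in T) p j)); last by rewrite Hsum mul0r.
  rewrite mulr_suml; apply: eq_bigr => i iT.
  rewrite (bigD1 i iT) /= !rmorphM /resid -/h mulrA divrK //; exact: K2.
have SQ : Q %| S by exact: K1.
have S0 : S = 0.
  apply/eqP; apply: contraT => Sn0.
  have := dvdp_leq Sn0 SQ.
  suff HS2 : (size S <= m * #|T|)%N. move=> H1; have Hx := leq_trans (leq_trans H1 HS2) Km. have aux : forall a b : nat, (1 < a)%N -> (a <= b)%N -> (b <= a.-1)%N -> False by move=> *; lia. by case: (aux _ _ Qs (leqnn _) Hx).
  apply: (big_ind (fun q : {poly F} => size q <= m * #|T|)%N).
  - by rewrite size_poly0.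
  - by move=> x y Hx Hy; apply: leq_trans (size_polyD _ _) _; rewrite geq_max Hx Hy.
  move=> i iT; apply: leq_trans (size_mul_leq _ _) _.
  have := @size_prod_bound _ _ [pred j | (j \in T) && (j != i)] _ _ Hsp.
  have := Hsf i iT.
  have := cardD1 i T; rewrite iT.
  have -> : #|[pred j | (j \in T) && (j != i)]| = #|[predD1 T & i]|.
    by apply: eq_card => j; rewrite !inE andbC.
  rewrite -/(Pj i).
  move=> HT Hf Hp.
  have H2 : (size (f i) + size (Pj i) <= m + (m * #|[predD1 T & i]| + 1))%N.
    apply: leq_add; [exact: Hf | exact: Hp].
  rewrite -subn1 leq_subLR.
  apply: leq_trans H2 _; rewrite HT /= add1n mulnS; lia.
move=> i iT.
have Hd : p i %| f i * Pj i.
  have : p i %| S by rewrite S0 dvdp0.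
  rewrite /S (bigD1 i iT) /= addrC dvdp_addr //.
  apply: (big_ind (fun q => p i %| q)); [exact: dvdp0 | by move=> x y Hx Hy; rewrite dvdp_add | ].
  move=> k /andP [kT ki].
  apply: dvdp_mull; rewrite /Pj (bigD1 i) /=; first exact: dvdp_mulIl.
  by rewrite iT eq_sym.
have Hc : coprimep (p i) (Pj i).
  apply: (big_ind (fun q => coprimep (p i) q)).
  - exact: coprimep1.
  - by move=> x y Hx Hy; rewrite coprimepMr Hx Hy.
  by move=> j /andP [_ ji]; apply: Hcop; rewrite eq_sym.
move: Hd; rewrite Gauss_dvdpl // => Hd.
apply/eqP; apply: contraT => fn0.
have Hle := dvdp_leq fn0 Hd; rewrite Hsp in Hle; have := leq_trans Hle (Hsf i iT); by rewrite ltnn.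
Qed.
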